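(* Assume the no-anticipation, common-support and transition-independence conditions stated in the context. Then for every $t\ge T_0+1$, \[ \boldsymbol\mu^{\mathrm{ATT}}_t=\sum_{\mathbf x_1^{T_0}\in\mathcal X^{T_0}}\Big\{\mathbb{E}\big[\mathbf X_t\mid \mathbf X_1^{T_0}=\mathbf x_1^{T_0},D=1\big]-\mathbb{E}\big[\mathbf X_t\mid \mathbf X_1^{T_0}=\mathbf x_1^{T_0},D=0\big]\Big\}\Pr(\mathbf X_1^{T_0}=\mathbf x_1^{T_0}\mid D=1), \] where terms with $\Pr(\mathbf X_1^{T_0}=\mathbf x_1^{T_0}\mid D=1)=0$ are omitted.
   Context: Fix integers $T_0\ge1$, $T_1\ge1$, $T=T_0+T_1$, $K\ge2$, and a set of $K$ outcome categories $\mathcal Y=\{\bar y^{(1)},\dots,\bar y^{(K)}\}$. On a probability space, a unit has a binary treatment indicator $D\in\{0,1\}$ (treated units are untreated in periods $1,\dots,T_0$ and treated in periods $T_0+1,\dots,T$; control units are never treated) and potential outcomes $Y_t(0),Y_t(1)\in\mathcal Y$, $t=1,\dots,T$. For $d\in\{0,1\}$ let $\mathbf X_t(d)=(\mathbf 1(Y_t(d)=\bar y^{(1)}),\dots,\mathbf 1(Y_t(d)=\bar y^{(K)}))^\top\in\mathcal X:=\{x\in\{0,1\}^K:\sum_k x^{(k)}=1\}$. Observed outcomes: $\mathbf X_t=\mathbf X_t(0)$ for $t\le T_0$ and $\mathbf X_t=D\mathbf X_t(1)+(1-D)\mathbf X_t(0)$ for $t\ge T_0+1$. Write $\mathbf X_1^{T_0}=(\mathbf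 X_1,\dots,\mathbf X_{T_0})$, $\mathbf X_1^{T_0}(0)=(\mathbf X_1(0),\dots,\mathbf X_{T_0}(0))$, and $\boldsymbol\mu^{\mathrm{ATT}}_t=\mathbb{E}[\mathbf X_t(1)-\mathbf X_t(0)\mid D=1]$ for $t\ge T_0+1$. Conditional quantities are taken only given events of positive probability. No anticipation: $\mathbf X_t(1)=\mathbf X_t(0)$ for $t\le T_0$. Common support: there is $\epsilon>0$ with $\epsilon\le\Pr(D=1\mid\mathbf X_1^{T_0}=\mathbf x_1^{T_0})<1-\epsilon$ for every $\mathbf x_1^{T_0}$ with $\Pr(\mathbf X_1^{T_0}=\mathbf x_1^{T_0})>0$. Transition independence: for every $t\ge T_0+1$, $\mathbf x_t\in\mathcal X$, $\mathbf x_1^{T_0}\in\mathcal X^{T_0}$: $\Pr(\mathbf X_t(0)=\mathbf x_t\mid \mathbf X_1^{T_0}(0)=\mathbf x_1^{T_0},D=1)=\Pr(\mathbf X_t(0)=\mathbf x_t\mid \mathbf X_1^{T_0}(0)=\mathbf x_1^{T_0},D=0)$. *)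

(* Defs.v *)
From mathcomp Require Import all_boot all_order all_algebra.
From mathcomp Require Import all_classical all_reals all_analysis.
Set Implicit Arguments. Unset Strict Implicit. Unset Printing Implicit Defensive.
Import Order.TTheory GRing.Theory Num.Theory.
Local Open Scope classical_set_scope.
Local Open Scope ring_scope.

Section Defs.
Context (d : measure_display) (T : measurableType d) (R : realType)
        (P : probability T R).

Definition Pr (A : set T) : R := fine (P A).

(* conditional probability Pr(A | B) (only used for Pr B > 0) *)
Definition cPr (A B : set T) : R := Pr (A `&` B) / Pr B.

(* E[ X | B ] for the one-hot vector X = (1(Y = k))_k of a categorical
   variable Y with categories 'I_K; component k is Pr(Y = k | B). *)
Definition condE (K : nat) (Y : T -> 'I_K) (B : set T) : 'cV[R]_K :=
  \col_(k < K) cPr [set w | Y w = k] B.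

End Defs.

Definition Dev (T : Type) (D : T -> bool) (b : bool) : set T :=
  [set w | D w = b].

Definition Yobs (T : Type) (K T0 : nat) (D : T -> bool)
  (Y0 Y1 : nat -> T -> 'I_K) (t : nat) (w : T) : 'I_K :=
  if (t <= T0)%N then Y0 t w else if D w then Y1 t w else Y0 t w.

(* the event {(Y_1, ..., Y_T0) = (x_1, ..., x_T0)}; x i is the value in period i+1 *)
Definition hist (T : Type) (K T0 : nat) (Y : nat -> T -> 'I_K)
  (x : {ffun 'I_T0 -> 'I_K}) : set T :=
  [set w | forall i : 'I_T0, Y i.+1 w = x i].

Definition muATT d (T : measurableType d) (R : realType) (P : probability T R)
  (K : nat) (D : T -> bool) (Y0 Y1 : nat -> T -> 'I_K) (t : nat) : 'cV[R]_K :=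
  condE P (Y1 t) (Dev D true) - condE P (Y0 t) (Dev D true).

(* Main.v *)
Require Import Defs.
From mathcomp Require Import all_boot all_order all_algebra.
From mathcomp Require Import all_classical all_reals all_analysis.
From mathcomp Require Import ring lra.
Import Order.TTheory GRing.Theory Num.Theory.
Local Open Scope classical_set_scope.
Local Open Scope ring_scope.

Section H.
Context (d : measure_display) (T : measurableType d) (R : realType)
        (P : probability T R).

Lemma Pr_ge0 A : 0 <= Pr P A.
Proof. by apply: fine_ge0; apply: measure_ge0. Qed.

Lemma PrU A B : measurable A -> measurable B -> A `&` B = set0 ->
  Pr P (A `|` B) = Pr P A + Pr P B.
Proof.
move=> mA mB AB; rewrite /Pr measureU // fineD //; exact: fin_num_measure.
Qed.

Lemma Pr_le A B : measurable A -> measurable B -> A `<=` B -> Pr P A <= Pr P B.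
Proof.
move=> mA mB AB; apply: fine_le; try exact: fin_num_measure.
by apply: le_measure => //; rewrite inE.
Qed.

Lemma Pr_split A B : measurable A -> measurable B ->
  Pr P A = Pr P (A `&` B) + Pr P (A `&` ~` B).
Proof.
move=> mA mB; rewrite -PrU; first by rewrite -setIUr setUv setIT.
- exact: measurableI.
- by apply: measurableI => //; apply: measurableC.
- by rewrite setIACA setICr setI0.
Qed.

Lemma Pr_part (I : finType) (f : T -> I) A :
  (forall x, measurable [set w | f w = x]) -> measurable A ->
  Pr P A = \sum_(x : I) Pr P (A `&` [set w | f w = x]).
Proof.
move=> mf mA.
have key : forall s : seq I, uniq s ->
  measurable [set w | f w \in s] /\
  Pr P (A `&` [set w | f w \in s]) = \sum_(x <- s) Pr P (A `&` [set w | f w = x]).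
  elim=> [|x s IH] /=.
    move=> _; rewrite big_nil.
    have -> : [set w | f w \in [::]] = set0 by apply/seteqP; split => w.
    by rewrite setI0 /Pr measure0.
  move=> /andP[xs us]; have [ms IHe] := IH us.
  have E : [set w | f w \in x :: s] = [set w | f w = x] `|` [set w | f w \in s].
    apply/seteqP; split => w /=; rewrite in_cons.
      by case/orP => [/eqP|]; [left|right].
    by case=> [->|->]; rewrite ?eqxx ?orbT.
  rewrite E; split; first exact: measurableU.
  rewrite setIUr PrU ?big_cons ?IHe //.
  - exact: measurableI.
  - exact: measurableI.
  - apply/seteqP; split => w //= [[_ /= e] [_ /= h]]; move: xs; rewrite -e h //.
have [_ h] := key (enum I) (enum_uniq I).
have E2 : [set w | f w \in enum I] = setT by apply/seteqP; split => w //= _; rewrite mem_enum.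
by rewrite E2 setIT in h; rewrite h big_enum.
Qed.

End H.

Lemma hist_meas d (T : measurableType d) (K T0 : nat) (Y : nat -> T -> 'I_K)
  (x : {ffun 'I_T0 -> 'I_K}) :
  (forall (t : nat) (k : 'I_K), measurable [set w | Y t w = k]) ->
  measurable (hist Y x).
Proof.
move=> mY.
have key : forall s : seq 'I_T0,
  measurable [set w | forall i, i \in s -> Y i.+1 w = x i].
  elim=> [|i s IH].
    have -> : [set w | forall i : 'I_T0, i \in [::] -> Y i.+1 w = x i] = setT.
      by apply/seteqP; split => w //= _ i.
    exact: measurableT.
  have -> : [set w | forall j : 'I_T0, j \in i :: s -> Y j.+1 w = x j] =
     [set w | Y i.+1 w = x i] `&` [set w | forall j, j \in s -> Y j.+1 w = x j].
    apply/seteqP; split => w /=.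
      move=> h; split; first by apply: h; rewrite mem_head.
      by move=> j js; apply: h; rewrite in_cons js orbT.
    by move=> [h1 h2] j; rewrite in_cons => /orP [/eqP ->|]; [|apply: h2].
  exact: measurableI.
have -> : hist Y x = [set w | forall i, i \in enum 'I_T0 -> Y i.+1 w = x i].
  apply/seteqP; split => w /= h i; first by move=> _; apply: h.
  by apply: h; rewrite mem_enum.
exact: key.
Qed.
Theorem corollary1 (d : measure_display) (T : measurableType d) (R : realType)
  (P : probability T R) (T0 T1 K : nat) (D : T -> bool) (Y0 Y1 : nat -> T -> 'I_K) :
  (1 <= T0)%N -> (1 <= T1)%N -> (2 <= K)%N ->
  (* measurability of the random variables *)
  measurable (Dev D true) ->
  (forall (t : nat) (k : 'I_K), measurable [set w | Y0 t w = k]) ->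
  (forall (t : nat) (k : 'I_K), measurable [set w | Y1 t w = k]) ->
  (* no anticipation *)
  (forall t w, (1 <= t <= T0)%N -> Y1 t w = Y0 t w) ->
  (* common support *)
  (exists eps : R, 0 < eps /\
     forall x : {ffun 'I_T0 -> 'I_K},
       0 < Pr P (hist (Yobs T0 D Y0 Y1) x) ->
       eps <= cPr P (Dev D true) (hist (Yobs T0 D Y0 Y1) x) < 1 - eps) ->
  (* transition independence *)
  (forall (t : nat) (k : 'I_K) (x : {ffun 'I_T0 -> 'I_K}),
     (T0 + 1 <= t <= T0 + T1)%N ->
     0 < Pr P (hist Y0 x `&` Dev D true) ->
     0 < Pr P (hist Y0 x `&` Dev D false) ->
     cPr P [set w | Y0 t w = k] (hist Y0 x `&` Dev D true)
     = cPr P [set w | Y0 t w = k] (hist Y0 x `&` Dev D false)) ->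
  forall t : nat, (T0 + 1 <= t <= T0 + T1)%N ->
    muATT P D Y0 Y1 t =
    \sum_(x : {ffun 'I_T0 -> 'I_K} |
            0 < cPr P (hist (Yobs T0 D Y0 Y1) x) (Dev D true))
      cPr P (hist (Yobs T0 D Y0 Y1) x) (Dev D true) *:
      (condE P (Yobs T0 D Y0 Y1 t) (hist (Yobs T0 D Y0 Y1) x `&` Dev D true)
       - condE P (Yobs T0 D Y0 Y1 t) (hist (Yobs T0 D Y0 Y1) x `&` Dev D false)).
Proof.
move=> _ _ _ mD m0 m1 noant [eps [eps0 cs]] TI t /andP[t1 t2].
have tT0 : (T0 < t)%N by rewrite -addn1.
set D1 := Dev D true.
have D0C : Dev D false = ~` D1.
  by apply/seteqP; split => w; rewrite /D1 /Dev /=; case: (D w).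
have mD0 : measurable (Dev D false) by rewrite D0C; apply: measurableC.
have hE : @hist T K T0 (Yobs T0 D Y0 Y1) = @hist T K T0 Y0.
  apply: boolp.funext => x; rewrite /hist /Yobs; apply/seteqP; split => w /= h i;
  by have := h i; rewrite ifT // (ltn_ord i).
rewrite hE in cs *.
have mH : forall x : {ffun 'I_T0 -> 'I_K}, measurable (hist Y0 x) by move=> x; apply: hist_meas m0.
have E1 : forall k S, [set w | Yobs T0 D Y0 Y1 t w = k] `&` (S `&` D1) =
                      [set w | Y1 t w = k] `&` (S `&` D1).
  move=> k S; apply/seteqP; split => w /= [h [h1 h2]]; (split; last by []);
  by move: h; rewrite /Yobs ifN -?ltnNge // h2.
have E0 : forall k S, [set w | Yobs T0 D Y0 Y1 t w = k] `&` (S `&` Dev D false) =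
                      [set w | Y0 t w = k] `&` (S `&` Dev D false).
  move=> k S; apply/seteqP; split => w /= [h [h1 h2]]; (split; last by []);
  by move: h; rewrite /Yobs ifN -?ltnNge // h2.
set hv := fun w => [ffun i : 'I_T0 => Y0 i.+1 w].
have hvE : forall x : {ffun 'I_T0 -> 'I_K}, [set w | hv w = x] = hist Y0 x.
  move=> x; apply/seteqP; split => w /=.
    by move=> <- i; rewrite /hv ffunE.
  by move=> h; apply/ffunP => i; rewrite /hv ffunE h.
have part : forall Y : set T, measurable Y ->
    Pr P (Y `&` D1) = \sum_(x : {ffun 'I_T0 -> 'I_K}) Pr P (Y `&` (hist Y0 x `&` D1)).
  move=> Y mY; rewrite (@Pr_part _ _ _ P _ hv).
  - by apply: eq_bigr => x _; rewrite hvE setIAC -setIA.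
  - by move=> x; rewrite hvE.
  - exact: measurableI.
apply/matrixP => k j; rewrite /muATT /condE summxE !mxE.
under eq_bigr => x _ do rewrite !mxE.
set p1 := Pr P D1.
pose g (x : {ffun 'I_T0 -> 'I_K}) := (Pr P ([set w | Y1 t w = k] `&` (hist Y0 x `&` D1))
           - Pr P ([set w | Y0 t w = k] `&` (hist Y0 x `&` D1))) / p1.
have step : forall x : {ffun 'I_T0 -> 'I_K}, 0 < cPr P (hist Y0 x) D1 ->
   cPr P (hist Y0 x) D1 *
   (cPr P [set w | Yobs T0 D Y0 Y1 t w = k] (hist Y0 x `&` D1) -
    cPr P [set w | Yobs T0 D Y0 Y1 t w = k] (hist Y0 x `&` Dev D false)) = g x.
  move=> x hpos.
  have a0 : 0 < Pr P (hist Y0 x `&` D1).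
    rewrite lt_def Pr_ge0 andbT; apply/eqP => h0.
    by move: hpos; rewrite /cPr h0 mul0r ltxx.
  have Hpos : 0 < Pr P (hist Y0 x).
    apply: lt_le_trans a0 _; apply: Pr_le; [exact: measurableI | exact: mH | exact: subIsetl].
  have [_ /= hlt] := andP (cs x Hpos).
  have b0 : 0 < Pr P (hist Y0 x `&` Dev D false).
    have sp := @Pr_split _ _ _ P _ _ (mH x) mD.
    rewrite -D0C in sp.
    rewrite /cPr setIC in hlt.
    have eq : Pr P (hist Y0 x `&` D1) =
       Pr P (hist Y0 x `&` D1) / Pr P (hist Y0 x) * Pr P (hist Y0 x).
      by rewrite divfK // gt_eqF.
    move: hlt eq; rewrite sp.
    move: (Pr P (hist Y0 x `&` D1) / Pr P (hist Y0 x)) => q.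
    move: Hpos; rewrite sp => Hpos.
    move: (Pr P (hist Y0 x `&` D1)) (Pr P (hist Y0 x `&` ~` D1)) Hpos eps0 => u v.
    move=> *; nra.
  have ti := TI t k x (introT andP (conj t1 t2)) a0 b0.
  rewrite /cPr E1 E0 in ti *.
  rewrite -ti /g /cPr /p1.
  have p0 : Pr P D1 != 0.
    by apply: contraTneq hpos => h0; rewrite /cPr h0 invr0 mulr0 ltxx.
  have : Pr P (hist Y0 x `&` D1) != 0 by rewrite gt_eqF.
  move: (Pr P (hist Y0 x `&` D1)) => a ha.
  by field; rewrite p0 ha.
have zero : forall x : {ffun 'I_T0 -> 'I_K}, ~~ (0 < cPr P (hist Y0 x) D1) -> g x = 0.
  move=> x; rewrite /cPr lt_def negb_and negbK divr_ge0 ?Pr_ge0 // orbF.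
  rewrite mulf_eq0 invr_eq0 => /orP [/eqP a0|/eqP p0]; last first.
    by rewrite /g /p1 p0 invr0 mulr0.
  have z : forall Y, measurable Y -> Pr P (Y `&` (hist Y0 x `&` D1)) = 0.
    move=> Y mY; apply/eqP; rewrite eq_le Pr_ge0 andbT -a0 setIC.
    have mHD : measurable (hist Y0 x `&` D1) by apply: measurableI.
    by apply: Pr_le; [exact: measurableI | exact: mHD | exact: subIsetl].
  by rewrite /g !z // subrr mul0r.
  rewrite (eq_bigr _ step).
  have -> : \sum_(x | 0 < cPr P (hist Y0 x) D1) g x = \sum_x g x.
    rewrite [RHS](bigID (fun x => 0 < cPr P (hist Y0 x) D1)) /=.
    by rewrite [X in _ = _ + X]big1 ?addr0.
  rewrite /g -mulr_suml sumrB -!part //.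
  by rewrite /cPr /p1 mulrBl.
Qed.
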